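(* Let $n\geq 2$ and consider the clustered graph of overlapping $n$-permutations. For every cluster $X$ there exists a unique cluster $Y$ such that there are exactly two (parallel) edges from $X$ to $Y$. Moreover, there are no clusters $X,Y$ with three or more edges from $X$ to $Y$.
   Context: An $n$-permutation is a permutation $\pi_1\cdots\pi_n$ of $\{1,\ldots,n\}$. For a word $w$ of distinct numbers, $\mathrm{red}(w)$ is the permutation obtained by replacing the $i$-th smallest letter by $i$. For an $(n-1)$-permutation $\tau$, the cluster with signature $\tau$ is the set of all $n$-permutations $\pi$ with $\mathrm{red}(\pi_1\cdots\pi_{n-1})=\tau$. The clustered graph of overlapping $n$-permutations is the directed multigraph (loops allowed) whose vertices are the $(n-1)!$ clusters and in which every $n$-permutation $\pi$ contributes exactly one edge, going from the cluster containing $\pi$ to the cluster with signature $\mathrm{red}(\pi_2\cdots\pi_n)$. *)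

(* Defs.v *)
(* Permutations of {1..n} are encoded 0-based as 'S_n
   (permutations of 'I_n = {0,...,n-1}); positions are also 0-based. *)
From mathcomp Require Import all_boot all_order all_fingroup.
Set Implicit Arguments. Unset Strict Implicit. Unset Printing Implicit Defensive.

Definition red (m : nat) (w : 'I_m -> nat) : 'I_m -> nat :=
  fun i => #|[pred j | w j < w i]|.

Definition has_sig (m : nat) (w : 'I_m -> nat) (tau : 'S_m) : bool :=
  [forall i, red w i == val (tau i)].

Lemma succ_lt (n : nat) (i : 'I_n.-1) : i.+1 < n.
Proof. by case: n i => [|n] [i Hi]. Qed.

Definition prefix_word (n : nat) (pi : 'S_n) : 'I_n.-1 -> nat :=
  fun i => val (pi (widen_ord (leq_pred n) i)).

Definition suffix_word (n : nat) (pi : 'S_n) : 'I_n.-1 -> nat :=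
  fun i => val (pi (Ordinal (succ_lt i))).

(* Clusters are identified with their signatures tau : 'S_(n-1).
   pi lies in cluster sigma iff red(prefix) = sigma, and its edge goes to the
   cluster with signature red(suffix). *)
Definition num_edges (n : nat) (sigma tau : 'S_n.-1) : nat :=
  #|[pred pi : 'S_n | has_sig (prefix_word pi) sigma && has_sig (suffix_word pi) tau]|.

(* Main.v *)
Require Import Defs.
From mathcomp Require Import all_boot all_order all_fingroup zify.
Set Implicit Arguments. Unset Strict Implicit. Unset Printing Implicit Defensive.

Lemma card_sumb (T : finType) (P : pred T) : #|[pred j | P j]| = \sum_(j : T) P j.
Proof.
rewrite -sum1_card big_mkcond /=; apply: eq_bigr => j _; by rewrite inE; case: (P j).
Qed.

Lemma sum_ord_lt m v : \sum_(j < m) (j < v : nat) = minn v m.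
Proof.
elim: m => [|m IH]; first by rewrite big_ord0; lia.
rewrite big_ord_recr /= IH; lia.
Qed.

Lemma sum_perm_lt m (pi : 'S_m) v : \sum_(j < m) (pi j < v : nat) = minn v m.
Proof.
rewrite (reindex_inj (@perm_inj _ pi^-1)) /=.
under eq_bigr => j _ do rewrite permKV.
exact: sum_ord_lt.
Qed.

Lemma red_pre m (pi : 'S_m.+1) (i : 'I_m) :
  red (prefix_word pi) i = pi (widen_ord (leqnSn m) i) - (pi ord_max < pi (widen_ord (leqnSn m) i)).
Proof.
rewrite /red card_sumb /prefix_word.
have E : forall j : 'I_m, widen_ord (leq_pred m.+1) j = widen_ord (leqnSn m) j by move=> j; apply: val_inj.
under eq_bigr => j _ do rewrite !E.
have := sum_perm_lt pi (pi (widen_ord (leqnSn m) i)).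
rewrite big_ord_recr /=.
have := ltn_ord (pi (widen_ord (leqnSn m) i)).
move=> H1 H2; set s := bigop _ _ _; move: H2; rewrite -/s; clearbody s; set v := nat_of_ord (pi _) in H1 *; case: (_ < v) => /=; lia.
Qed.

Lemma red_suf m (pi : 'S_m.+1) (i : 'I_m) :
  red (suffix_word pi) i = pi (lift ord0 i) - (pi ord0 < pi (lift ord0 i)).
Proof.
rewrite /red card_sumb /suffix_word.
have E : forall j : 'I_m, Ordinal (succ_lt (n:=m.+1) j) = lift ord0 j by move=> j; apply: val_inj => /=; rewrite /bump add1n.
under eq_bigr => j _ do rewrite !E.
have := sum_perm_lt pi (pi (lift ord0 i)).
rewrite big_ord_recl /=.
have := ltn_ord (pi (lift ord0 i)).
move=> H1 H2; set s := bigop _ _ _; move: H2; rewrite -/s; clearbody s; set v := nat_of_ord (pi _) in H1 *; case: (_ < v) => /=; lia.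
Qed.

Section Main.
Variables (m : nat) (hm : 0 < m) (X : 'S_m).

Lemma wdE (i : 'I_m) : widen_ord (leqnSn m) i = lift ord_max i.
Proof. apply: val_inj; exact: (esym (lift_max i)). Qed.

Definition j0 : 'I_m := Ordinal hm.
Lemma i0_lt : m.-1 < m. Proof. by case: m hm. Qed.
Definition i0 : 'I_m := Ordinal i0_lt.

Lemma lj0 : lift ord_max j0 = ord0.
Proof. apply: val_inj; exact: (lift_max j0). Qed.
Lemma li0 : lift ord0 i0 = ord_max.
Proof. apply: val_inj; rewrite /= /bump /=. by case: m hm. Qed.

Lemma sigE m' (w : 'I_m' -> nat) (Y : 'S_m') i : has_sig w Y -> red w i = Y i.
Proof. by move/forallP/(_ i)/eqP. Qed.

Lemma sig_uniq m' (w : 'I_m' -> nat) (Y1 Y2 : 'S_m') : has_sig w Y1 -> has_sig w Y2 -> Y1 = Y2.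
Proof.
move=> H1 H2; apply/permP => i; apply: val_inj => /=.
by rewrite -(sigE i H1) -(sigE i H2).
Qed.

Lemma cluster_val (pi : 'S_m.+1) i : has_sig (prefix_word pi) X ->
  val (pi (lift ord_max i)) = X i + (pi ord_max <= X i).
Proof.
move=> H; have := sigE i H; rewrite red_pre wdE.
have : pi (lift ord_max i) != pi ord_max.
  rewrite (inj_eq perm_inj); apply/eqP => /(congr1 (@nat_of_ord _)); rewrite lift_max => /= E; have := ltn_ord i; by rewrite E ltnn.
rewrite -(inj_eq val_inj) /=.
move: (nat_of_ord (pi (lift ord_max i))) (nat_of_ord (pi ord_max)) => v k.
lia.
Qed.

Lemma cluster_inj (pi pi' : 'S_m.+1) : has_sig (prefix_word pi) X -> has_sig (prefix_word pi') X ->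
  pi ord_max = pi' ord_max -> pi = pi'.
Proof.
move=> H H' E; apply/permP => j.
case: (unliftP ord_max j) => [i ->|->] //.
by apply: val_inj; rewrite !cluster_val // E.
Qed.

Definition mkf (k : 'I_m.+1) (j : 'I_m.+1) : 'I_m.+1 :=
  if unlift ord_max j is Some i then inord (X i + (k <= X i)) else k.

Lemma mkf_lt (k : 'I_m.+1) i : X i + (k <= X i) < m.+1.
Proof. have := ltn_ord (X i). lia. Qed.

Lemma mkf_inj k : injective (mkf k).
Proof.
move=> j1 j2; rewrite /mkf.
case: (unliftP ord_max j1) => [i1 ->|->]; case: (unliftP ord_max j2) => [i2 ->|->] //.
- move/(congr1 val); rewrite /= !inordK ?mkf_lt // => E.
  have : X i1 = X i2 by apply: val_inj; move: E; rewrite /=; move: (nat_of_ord k) (nat_of_ord (X i1)) (nat_of_ord (X i2)) => a b c; lia.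
  by move/perm_inj ->.
- move/(congr1 val); rewrite /= !inordK ?mkf_lt //.
  move: (nat_of_ord k) (nat_of_ord (X i1)) => a b; lia.
- move/(congr1 val); rewrite /= !inordK ?mkf_lt //.
  move: (nat_of_ord k) (nat_of_ord (X i2)) => a b; lia.
Qed.

Definition mk k : 'S_m.+1 := perm (@mkf_inj k).

Lemma mk_max k : mk k ord_max = k.
Proof. by rewrite permE /mkf unlift_none. Qed.

Lemma mk_lift k i : val (mk k (lift ord_max i)) = X i + (k <= X i).
Proof. by rewrite permE /mkf liftK /= inordK ?mkf_lt. Qed.

Lemma mk_cluster k : has_sig (prefix_word (mk k)) X.
Proof.
apply/forallP => i; apply/eqP; rewrite red_pre wdE mk_lift mk_max.
case: (X i) => b hb /=; move: (nat_of_ord k) => a; lia.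
Qed.

Lemma suf_exists (pi : 'S_m.+1) : exists Y : 'S_m, has_sig (suffix_word pi) Y.
Proof.
have lt : forall i, red (suffix_word pi) i < m.
  move=> i; rewrite red_suf.
  have : pi (lift ord0 i) != pi ord0 by rewrite (inj_eq perm_inj) eq_sym neq_lift.
  rewrite -(inj_eq val_inj) /=.
  have := ltn_ord (pi (lift ord0 i)); have := ltn_ord (pi ord0).
  move: (nat_of_ord (pi (lift ord0 i))) (nat_of_ord (pi ord0)) => v k; lia.
have ginj : injective (fun i => (Ordinal (lt i) : 'I_m)).
  move=> i1 i2 /(congr1 val); rewrite /= !red_suf.
  have : pi (lift ord0 i1) != pi ord0 by rewrite (inj_eq perm_inj) eq_sym neq_lift.
  have : pi (lift ord0 i2) != pi ord0 by rewrite (inj_eq perm_inj) eq_sym neq_lift.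
  rewrite -!(inj_eq val_inj) /= => N1 N2 E.
  have : pi (lift ord0 i1) = pi (lift ord0 i2).
    apply: ord_inj; move: N1 N2 E.
    move: (nat_of_ord (pi (lift ord0 i1))) (nat_of_ord (pi (lift ord0 i2))) (nat_of_ord (pi ord0)) => a b c. lia.
  by move/perm_inj/lift_inj.
exists (perm ginj); apply/forallP => i; by rewrite permE.
Qed.

Lemma edge_eq (pi : 'S_m.+1) (Y : 'S_m) : has_sig (prefix_word pi) X -> has_sig (suffix_word pi) Y ->
  nat_of_ord (Y i0) = pi ord_max - (X j0 + (pi ord_max <= X j0) < pi ord_max).
Proof.
move=> H1 H2; rewrite -(sigE i0 H2) red_suf li0 -lj0 cluster_val //.
Qed.


Lemma bound (Y : 'S_m) : num_edges (n:=m.+1) X Y <= 2.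
Proof.
rewrite /num_edges.
set E := [pred pi : 'S_m.+1 | _].
rewrite -(card_in_imset (f := fun pi : 'S_m.+1 => pi ord_max) (D := E)).
- apply: (@leq_trans #|[set (inord (Y i0) : 'I_m.+1); inord (Y i0).+1]|).
  + apply: subset_leq_card; apply/subsetP => x /imsetP [pi]; rewrite inE => /andP [H1 H2] ->.
    have := edge_eq H1 H2; rewrite !inE.
    have lt := ltn_ord (Y i0).
    move=> Eq.
    have [K|K] : nat_of_ord (pi ord_max) = Y i0 \/ nat_of_ord (pi ord_max) = (Y i0).+1 by lia.
    * by apply/orP; left; apply/eqP; apply: ord_inj; rewrite inordK // ltnW.
    * by apply/orP; right; apply/eqP; apply: ord_inj; rewrite inordK.
  + by rewrite cards2; case: (_ != _).
- move=> p1 p2; rewrite !inE => /andP [H1 _] /andP [H2 _]; exact: cluster_inj.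
Qed.

Lemma two_exists : exists! Y : 'S_m, num_edges (n:=m.+1) X Y = 2.
Proof.
have Xlt := ltn_ord (X j0).
pose a : 'I_m.+1 := inord (X j0).
pose b : 'I_m.+1 := inord (X j0).+1.
have va : nat_of_ord a = X j0 by rewrite inordK // ltnW.
have vb : nat_of_ord b = (X j0).+1 by rewrite inordK.
have [Y0 HY0] := suf_exists (mk a).
have e0 : forall k, nat_of_ord (mk k ord0) = X j0 + (k <= X j0) by move=> k; rewrite -lj0 mk_lift.
have Hb : has_sig (suffix_word (mk b)) Y0.
  apply/forallP => i; apply/eqP; transitivity (red (suffix_word (mk a)) i); last exact: sigE i HY0.
  rewrite !red_suf !e0.
  case: (unliftP ord_max (lift ord0 i)) => [j Ej|Ej]; rewrite Ej.
  - rewrite !mk_lift.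
    have Nj : nat_of_ord (X j) <> nat_of_ord (X j0).
      move/ord_inj/perm_inj => E'; move: Ej; rewrite E' lj0 => /eqP.
      by rewrite eq_sym (negbTE (neq_lift _ _)).
    rewrite va vb; lia.
  - rewrite !mk_max va vb; lia.
exists Y0; split.
- apply/eqP; rewrite eqn_leq bound /=; apply/card_gt1P; exists (mk a), (mk b).
  rewrite !inE !mk_cluster HY0 Hb; split => //.
  apply/eqP => /(congr1 (fun p : 'S_m.+1 => nat_of_ord (p ord_max))); rewrite /= !mk_max va vb; lia.
- move=> Y HY.
  have : 1 < num_edges (n:=m.+1) X Y by rewrite HY.
  case/card_gt1P => p1 [p2 [H1 H2 N]].
  rewrite !inE in H1 H2; case/andP: H1 => C1 S1; case/andP: H2 => C2 S2.
  have E1 := edge_eq C1 S1; have E2 := edge_eq C2 S2.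
  have Nk : nat_of_ord (p1 ord_max) <> nat_of_ord (p2 ord_max).
    move/ord_inj => Ek; move/eqP: N; apply; exact: cluster_inj.
  have [K|K] : nat_of_ord (p1 ord_max) = X j0 \/ nat_of_ord (p2 ord_max) = X j0 by lia.
  + have E : p1 = mk a by apply: cluster_inj => //; [exact: mk_cluster | apply: ord_inj; rewrite mk_max va].
    by rewrite E in S1; exact: sig_uniq HY0 S1.
  + have E : p2 = mk a by apply: cluster_inj => //; [exact: mk_cluster | apply: ord_inj; rewrite mk_max va].
    by rewrite E in S2; exact: sig_uniq HY0 S2.
Qed.

End Main.

Theorem lemma2 (n : nat) (hn : 2 <= n) :
  (forall X : 'S_n.-1, exists! Y : 'S_n.-1, num_edges X Y = 2) /\
  (forall X Y : 'S_n.-1, num_edges X Y < 3).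
Proof.
case: n hn => [|m] // hm.
have hm' : 0 < m by [].
split.
- move=> X; exact: (two_exists hm' X).
- move=> X Y; have := bound hm' X Y; by rewrite ltnS.
Qed.
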